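(* Let $\Phi$ be the historical operator. For each of the following axioms there exists a standard rule $R$ satisfying the standard version of the axiom such that the general rule $\Phi(R)$ violates the general version of that axiom: claims monotonicity, composition up, composition down, self-duality, population monotonicity, and consistency.
   Context: Agents are elements of $\mathbb{N}$; $N$ denotes a nonempty finite subset of $\mathbb{N}$. A (standard) claims problem is a triple $(N,c,E)$ with $c\in\mathbb{R}_+^N$, $E\in\mathbb{R}_+$, $C=\sum_{i\in N}c_i>0$ and $E\le C$. An allocation for it is $x\in\mathbb{R}^N$ with $0\le x_i\le c_i$ and $\sum_ix_i=E$. A standard rule $R$ assigns to each standard claims problem an allocation $R(N,c,E)$. A history for $N$ is a finite sequence $h=\{(c^{(t)},x^{(t)})\}_{t=1}^{|T|}$ where for each $t$, $c^{(t)}\in\mathbb{R}_+^N$ and $x^{(t)}$ is an allocation of the standard problem $(N,c^{(t)},\sum_ix_i^{(t)})$. A historical claims problem is $(N,c,E,h)$ with $(N,c,E)$ a standard claims problem and $h$ a history for $N$; a general rule $S$ assigns to each an allocation of $(N,c,E)$. For $M\subseteq N$, $h_M$ denotes the history obtained by restricting every $c^{(t)}$ and $x^{(t)}$ to coordinates in $M$. Let $\Delta^c_i=\sum_tc^{(t)}_i$, $\Delta^x_i=\sum_tx^{(t)}_i$, $\widetilde{c}_i=c_i+\Delta^c_i-\Delta^x_i$. Historical operator: for a standard rule $R$, $\Phi_i(R)(N,c,E,h)=\min\{c_i,R_i(N,\widetilde{c},E)+\lambda\}$, where $\lambda\in\mathbb{R}_+$ is such that these amounts sum to $E$ (such $\lambda$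 exists and the resulting vector does not depend on its choice). Standard axioms: claims monotonicity: for $i\in N$ and $c'_i>c_i$, $R_i(N,(c'_i,c_{-i}),E)\ge R_i(N,c,E)$; composition up: for $E_1,E_2>0$ with $E_1+E_2=E$, $R(N,c,E)=R(N,c,E_1)+R(N,c-R(N,c,E_1),E_2)$; composition down: for $E<E'\le C$, $R(N,c,E)=R(N,R(N,c,E'),E)$; self-duality: $R(N,c,C-E)=c-R(N,c,E)$; population monotonicity: if $N\subseteq N'$, $(N',c',E)$ is a problem with $c'_N=c$, then $R_i(N',c',E)\le R_i(N,c,E)$ for all $i\in N$; consistency: for $M\subset N$ and $i\in M$, $R_i(N,c,E)=R_i(M,c_M,\sum_{k\in M}R_k(N,c,E))$. General axioms: the same conditions for $S$ with the history held fixed: claims monotonicity: $S_i(N,(c'_i,c_{-i}),E,h)\ge S_i(N,c,E,h)$ for $c'_i>c_i$; composition up: $S(N,c,E,h)=S(N,c,E_1,h)+S(N,c-S(N,c,E_1,h),E_2,h)$; composition down: $S(N,c,E,h)=S(N,S(N,c,E',h),E,h)$ for $E<E'\le C$; self-duality: $S(N,c,C-E,h)=c-S(N,c,E,h)$; population monotonicity: if $N\subseteq N'$, $c'_N=c$ and $h'_N=h$, then $S_i(N',c',E,h')\le S_i(N,c,E,h)$ for all $i\in N$; consistency: for $M\subset N$, $i\in M$, $S_i(N,c,E,h)=S_i(M,c_M,E_M,h_M)$ with $E_M=\sum_{k\in M}S_k(N,c,E,h)$. *)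

(* Defs.v *)
(* R : realType (mathcomp-analysis reals), agents nat,
   agent sets {fset nat} (finmap), vectors nat -> R read only on N. *)
From HB Require Import structures.
From mathcomp Require Import all_boot all_order all_algebra finmap.
From mathcomp Require Import boolp classical_sets reals.
Set Implicit Arguments. Unset Strict Implicit. Unset Printing Implicit Defensive.
Import Order.TTheory GRing.Theory Num.Theory.
Local Open Scope ring_scope.

Section Claims.
Variable R : realType.

Definition vec := nat -> R.
(* a history: list of periods (c^(t), x^(t)) *)
Definition hist := seq (vec * vec).
Definition srule := {fset nat} -> vec -> R -> vec.
Definition grule := {fset nat} -> vec -> R -> hist -> vec.

Definition total (N : {fset nat}) (v : vec) : R := \sum_(i <- N) v i.

Definition valid_prob (N : {fset nat}) (c : vec) (E : R) : Prop :=
  N != fset0 /\ (forall i, i \in N -> 0 <= c i) /\ 0 <= E /\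
  0 < total N c /\ E <= total N c.

Definition is_alloc (N : {fset nat}) (c : vec) (E : R) (x : vec) : Prop :=
  (forall i, i \in N -> 0 <= x i <= c i) /\ total N x = E.

Definition valid_hist (N : {fset nat}) (h : hist) : Prop :=
  forall p, p \in h ->
    valid_prob N p.1 (total N p.2) /\ is_alloc N p.1 (total N p.2) p.2.

Definition valid_hprob N c E h := valid_prob N c E /\ valid_hist N h.

Definition agree (N : {fset nat}) (u v : vec) := forall i, i \in N -> u i = v i.

Definition hist_agree (N : {fset nat}) (h' h : hist) : Prop :=
  size h' = size h /\
  forall t, (t < size h)%N ->
    agree N (nth (fun _ => 0, fun _ => 0) h' t).1 (nth (fun _ => 0, fun _ => 0) h t).1 /\
    agree N (nth (fun _ => 0, fun _ => 0) h' t).2 (nth (fun _ => 0, fun _ => 0) h t).2.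

Definition standard_rule (r : srule) : Prop :=
  (forall N c E, valid_prob N c E -> is_alloc N c E (r N c E)) /\
  (forall N c c' E, valid_prob N c E -> agree N c c' -> agree N (r N c E) (r N c' E)).

Definition upd (c : vec) (i : nat) (v : R) : vec := fun j => if j == i then v else c j.
Definition vsub (u v : vec) : vec := fun j => u j - v j.

Definition Delta_c (h : hist) (i : nat) : R := \sum_(p <- h) p.1 i.
Definition Delta_x (h : hist) (i : nat) : R := \sum_(p <- h) p.2 i.
Definition ctilde (c : vec) (h : hist) : vec := fun i => c i + Delta_c h i - Delta_x h i.

Definition phi (r : srule) : grule := fun N c E h =>
  let rt := r N (ctilde c h) E in
  let lam := xget 0 (fun l : R =>
               0 <= l /\ \sum_(i <- N) Num.min (c i) (rt i + l) = E) in
  fun i => Num.min (c i) (rt i + lam).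

Definition claims_mono (r : srule) : Prop :=
  forall N c E i ci', valid_prob N c E -> i \in N -> c i < ci' ->
    r N c E i <= r N (upd c i ci') E i.

Definition comp_up (r : srule) : Prop :=
  forall N c E1 E2, valid_prob N c (E1 + E2) -> 0 < E1 -> 0 < E2 ->
    agree N (r N c (E1 + E2)) (fun i => r N c E1 i + r N (vsub c (r N c E1)) E2 i).

Definition comp_down (r : srule) : Prop :=
  forall N c E E', valid_prob N c E' -> 0 <= E -> E < E' ->
    agree N (r N c E) (r N (r N c E') E).

Definition self_dual (r : srule) : Prop :=
  forall N c E, valid_prob N c E ->
    agree N (r N c (total N c - E)) (vsub c (r N c E)).

Definition pop_mono (r : srule) : Prop :=
  forall N N' c c' E, (N `<=` N')%fset -> valid_prob N c E -> valid_prob N' c' E ->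
    agree N c' c -> forall i, i \in N -> r N' c' E i <= r N c E i.

Definition consistency (r : srule) : Prop :=
  forall N M c E, (M `<` N)%fset -> valid_prob N c E ->
    valid_prob M c (total M (r N c E)) ->
    agree M (r N c E) (r M c (total M (r N c E))).

Definition gclaims_mono (S : grule) : Prop :=
  forall N c E h i ci', valid_hprob N c E h -> i \in N -> c i < ci' ->
    S N c E h i <= S N (upd c i ci') E h i.

Definition gcomp_up (S : grule) : Prop :=
  forall N c E1 E2 h, valid_hprob N c (E1 + E2) h -> 0 < E1 -> 0 < E2 ->
    agree N (S N c (E1 + E2) h)
      (fun i => S N c E1 h i + S N (vsub c (S N c E1 h)) E2 h i).

Definition gcomp_down (S : grule) : Prop :=
  forall N c E E' h, valid_hprob N c E' h -> 0 <= E -> E < E' ->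
    agree N (S N c E h) (S N (S N c E' h) E h).

Definition gself_dual (S : grule) : Prop :=
  forall N c E h, valid_hprob N c E h ->
    agree N (S N c (total N c - E) h) (vsub c (S N c E h)).

Definition gpop_mono (S : grule) : Prop :=
  forall N N' c c' E h h', (N `<=` N')%fset -> valid_hprob N c E h -> valid_hprob N' c' E h' ->
    agree N c' c -> hist_agree N h' h ->
    forall i, i \in N -> S N' c' E h' i <= S N c E h i.

(* c_M and h_M are represented by c and h themselves (vectors are read on M only) *)
Definition gconsistency (S : grule) : Prop :=
  forall N M c E h, (M `<` N)%fset -> valid_hprob N c E h ->
    valid_hprob M c (total M (S N c E h)) h ->
    agree M (S N c E h) (S M c (total M (S N c E h)) h).

End Claims.

(* Main.v *)
Require Import Defs.
From HB Require Import structures.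
From mathcomp Require Import all_boot all_order all_algebra finmap.
From mathcomp Require Import boolp classical_sets reals.
From mathcomp Require Import ring lra.
Set Implicit Arguments. Unset Strict Implicit. Unset Printing Implicit Defensive.
Import Order.TTheory GRing.Theory Num.Theory.
Local Open Scope ring_scope.
Local Notation total := Defs.total.
Section S.
Variable R : realType.
Definition N3 : {fset nat} := (0%N |` (1%N |` [fset 2%N]))%fset.
Definition N2 : {fset nat} := (0%N |` [fset 1%N])%fset.
Lemma sum3 (f : nat -> R) : \sum_(i <- N3) f i = f 0%N + f 1%N + f 2%N.
Proof.
rewrite /N3 big_fsetU1 ?inE //= big_fsetU1 ?inE //= big_seq_fset1 addrA //.
Qed.
Lemma sum2 (f : nat -> R) : \sum_(i <- N2) f i = f 0%N + f 1%N.
Proof. by rewrite /N2 big_fsetU1 ?inE //= big_seq_fset1. Qed.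

Lemma sum_nonneg_eq0 (N : {fset nat}) (g : nat -> R) :
  (forall i, i \in N -> 0 <= g i) -> \sum_(i <- N) g i = 0 ->
  forall i, i \in N -> g i = 0.
Proof.
move=> g0 s0 i iN; move: s0; rewrite (big_fsetD1 i) //= => s0.
have h1 : 0 <= \sum_(j <- (N `\ i)%fset) g j.
  rewrite big_seq; apply: sumr_ge0 => j; rewrite in_fsetD1 => /andP[_ jN]; exact: g0.
have := g0 i iN; lra.
Qed.

Lemma phi_val (r : srule R) (N : {fset nat}) (c : vec R) (E : R) (h : hist R) (lam : R) :
  0 <= lam ->
  \sum_(i <- N) Num.min (c i) (r N (ctilde c h) E i + lam) = E ->
  forall i, i \in N -> phi r N c E h i = Num.min (c i) (r N (ctilde c h) E i + lam).
Proof.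
move=> l0 sE.
rewrite /phi.
set rt := r N (ctilde c h) E.
set P := (fun l : R => _).
have Pl : P lam by split.
have [l1ge0 s1] : P (xget 0 P) by apply: xgetI Pl.
set l1 := xget 0 P in l1ge0 s1 *.
have key : forall a b, a <= b ->
   \sum_(i <- N) Num.min (c i) (rt i + a) = E ->
   \sum_(i <- N) Num.min (c i) (rt i + b) = E ->
   forall i, i \in N -> Num.min (c i) (rt i + b) = Num.min (c i) (rt i + a).
  move=> a b ab sa sb i iN.
  have mono : forall j, Num.min (c j) (rt j + a) <= Num.min (c j) (rt j + b).
    move=> j; rewrite le_min !ge_min lexx lerD2l ab !orbT //.
  have := @sum_nonneg_eq0 N (fun j => Num.min (c j) (rt j + b) - Num.min (c j) (rt j + a)).
  move=> /(_ _ _ i iN) H.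
  apply/eqP; rewrite -subr_eq0; apply/eqP; apply: H.
  - by move=> j _; rewrite subr_ge0.
  - by rewrite sumrB sa sb subrr.
move=> i iN.
case: (leP lam l1) => hl.
- exact: key.
- symmetry; apply: key => //; exact: ltW.
Qed.

Lemma total_ge0 (N : {fset nat}) (c : vec R) :
  (forall i, i \in N -> 0 <= c i) -> 0 <= total N c.
Proof. by move=> h; rewrite /total big_seq; apply: sumr_ge0. Qed.

Lemma totalD1 (N : {fset nat}) (c : vec R) i : i \in N ->
  total N c = c i + total (N `\ i)%fset c.
Proof. by move=> iN; rewrite /total (big_fsetD1 i). Qed.

Lemma total_agree (N : {fset nat}) (c c' : vec R) : agree N c c' -> total N c = total N c'.
Proof. by move=> h; rewrite /total big_seq [RHS]big_seq; apply: eq_bigr => i /h. Qed.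

Lemma total_scale (N : {fset nat}) (c : vec R) k D :
  total N (fun i => k * c i / D) = k * total N c / D.
Proof. by rewrite /total -mulr_suml -mulr_sumr. Qed.

Lemma total_sub (N : {fset nat}) (c x : vec R) : total N (vsub c x) = total N c - total N x.
Proof. by rewrite /total /vsub sumrB. Qed.

Lemma frac_mono (E x y K : R) : 0 <= E -> 0 <= x -> x <= y -> 0 <= K -> 0 <= x + K ->
  E * x / (x + K) <= E * y / (y + K).
Proof.
move=> E0 x0 xy K0 xK0.
have [xK|xKn] := eqVneq (x + K) 0.
  rewrite xK invr0 mulr0; apply: divr_ge0; [apply: mulr_ge0 => //; lra | lra].
have xK : 0 < x + K by rewrite lt_def xKn xK0.
have yK : 0 < y + K by lra.
rewrite ler_pdivrMr // mulrAC ler_pdivlMr //.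
have : 0 <= (E * K) * (y - x) by apply: mulr_ge0; [apply: mulr_ge0|rewrite subr_ge0].
move=> h; rewrite -subr_ge0; have -> : E * y * (x + K) - E * x * (y + K) = (E * K) * (y - x) by ring.
exact: h.
Qed.

Lemma frac_anti (a C C' : R) : 0 <= a -> 0 < C -> C <= C' -> a / C' <= a / C.
Proof.
move=> a0 C0 CC; apply: ler_wpM2l => //.
rewrite lef_pV2 // posrE; lra.
Qed.

Lemma frac_le1 (E x C : R) : 0 <= E -> E <= C -> 0 <= x -> 0 <= E * x / C <= x.
Proof.
move=> E0 EC x0; case: (ltrgt0P C) => [C0|C0|C0].
all: try (exfalso; lra).
- apply/andP; split; first by apply: divr_ge0 => //; [apply: mulr_ge0|apply: ltW].
  rewrite ler_pdivrMr //; nra.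
- by rewrite C0 invr0 mulr0 x0 lexx.
Qed.

Definition prR : srule R := fun N c E i => E * c i / total N c.

Lemma prop_sum N c E : total N c != 0 -> total N (prR N c E) = E.
Proof. by move=> h; rewrite /prR total_scale mulfK. Qed.

Lemma prop_std : standard_rule prR.
Proof.
split.
- move=> N c E [N0 [c0 [E0 [C0 EC]]]]; split.
    by move=> i iN; apply: frac_le1 => //; exact: c0.
  by apply: prop_sum; rewrite gt_eqF.
- move=> N c c' E _ h i iN; by rewrite /prR (h i iN) (total_agree h).
Qed.

Lemma upd_total (N : {fset nat}) (c : vec R) i v : i \in N ->
  total N (upd c i v) = v + total (N `\ i)%fset c.
Proof.
move=> iN; rewrite (totalD1 _ iN) /upd eqxx; congr (_ + _).
apply: total_agree => j; rewrite in_fsetD1 => /andP[/negPf -> _] //.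
Qed.

Lemma prop_cm : claims_mono prR.
Proof.
move=> N c E i ci' [N0 [c0 [E0 [C0 EC]]]] iN lt.
rewrite /prR upd_total // (totalD1 c iN) /upd eqxx.
apply: frac_mono => //; first exact: c0.
  exact: ltW.
apply: total_ge0 => j; rewrite in_fsetD1 => /andP[_ jN]; exact: c0.
rewrite -(totalD1 c iN); exact: ltW.
Qed.

Lemma prop_cu : comp_up prR.
Proof.
move=> N c E1 E2 [N0 [c0 [E0 [C0 EC]]]] h1 h2 i iN.
rewrite /prR total_sub -/(prR N c E1) prop_sum ?gt_eqF //.
set C := total N c in C0 EC *.
have hC : C != 0 by rewrite gt_eqF.
have hC1 : C - E1 != 0 by rewrite gt_eqF //; lra.
rewrite /vsub /prR -/C.
field; by rewrite hC hC1.
Qed.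

Lemma prop_cd : comp_down prR.
Proof.
move=> N c E E' [N0 [c0 [E0 [C0 EC]]]] h0 h1 i iN.
rewrite {2}/prR prop_sum ?gt_eqF //.
have hE : E' != 0 by rewrite gt_eqF //; lra.
have hC : total N c != 0 by rewrite gt_eqF.
rewrite /prR; field; by rewrite hE hC.
Qed.

Lemma prop_sd : self_dual prR.
Proof.
move=> N c E [N0 [c0 [E0 [C0 EC]]]] i iN.
have hC : total N c != 0 by rewrite gt_eqF.
rewrite /prR /vsub; field; by rewrite hC.
Qed.

Lemma total_sub_le (N N' : {fset nat}) (c : vec R) : (N `<=` N')%fset ->
  (forall i, i \in N' -> 0 <= c i) -> total N c <= total N' c.
Proof.
move=> sub c0; rewrite /total [X in _ <= X](big_fsetID _ (fun x => x \in N)) /=.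
have -> : \sum_(i <- [fset x in N' | x \in N]%fset) c i = \sum_(i <- N) c i.
  apply: eq_fbigl => i; rewrite !inE /=; apply/andP/idP => [[]//|iN].
  by split => //; apply: (fsubsetP sub).
rewrite lerDl big_seq; apply: sumr_ge0 => i; rewrite !inE /= => /andP[iN _]; exact: c0.
Qed.

Lemma prop_pm : pop_mono prR.
Proof.
move=> N N' c c' E sub [N0 [c0 [E0 [C0 EC]]]] [N0' [c0' [E0' [C0' EC']]]] ag i iN.
rewrite /prR (ag i iN).
apply: frac_anti => //.
  by apply: mulr_ge0 => //; apply: c0.
rewrite -(total_agree ag); exact: total_sub_le.
Qed.

Lemma prop_cons : consistency prR.
Proof.
move=> N M c E sub [N0 [c0 [E0 [C0 EC]]]] [M0 [cM0 [EM0 [CM0 ECM]]]] i iM.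
rewrite {2}/prR /prR total_scale.
have hC : total N c != 0 by rewrite gt_eqF.
have hM : total M c != 0 by rewrite gt_eqF.
field; by rewrite hC hM.
Qed.

Lemma min_case (x y : R) : (x <= y /\ Num.min x y = x) \/ (y <= x /\ Num.min x y = y).
Proof.
case: (leP x y) => h; [left|right]; split => //; exact: ltW.
Qed.

Definition e0 (N : {fset nat}) (c : vec R) (E : R) : R :=
  if 0%N \in N then Num.min (c 0%N) E else 0.
Definition pp0 : srule R := fun N c E i =>
  if i == 0%N then e0 N c E else (E - e0 N c E) * c i / total (N `\ 0%N)%fset c.

Lemma total_split0 (N : {fset nat}) (v : vec R) :
  total N v = (if 0%N \in N then v 0%N else 0) + total (N `\ 0%N)%fset v.
Proof.
case: ifP => h; first exact: totalD1.
by rewrite add0r mem_fsetD1 // h.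
Qed.

Lemma e0_facts N c E : valid_prob N c E ->
  [/\ 0 <= e0 N c E, e0 N c E <= E, (0%N \in N -> e0 N c E <= c 0%N) &
      E - e0 N c E <= total (N `\ 0%N)%fset c].
Proof.
move=> [N0 [c0 [E0 [C0 EC]]]].
have S0 : 0 <= total (N `\ 0%N)%fset c.
  apply: total_ge0 => j; rewrite in_fsetD1 => /andP[_ jN]; exact: c0.
move: EC; rewrite total_split0 /e0; case: ifP => h EC.
  have := c0 _ h; case: (min_case (c 0%N) E) => [[l ->]|[l ->]] cc; split; lra.
split => //; lra.
Qed.

Lemma pp0_std : standard_rule pp0.
Proof.
split.
- move=> N c E vp; have [ge le lec leS] := e0_facts vp.
  move: (vp) => [N0 [c0 [E0 [C0 EC]]]].
  split.
    move=> i iN; rewrite /pp0; case: eqP => [e|ne].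
      by subst i; rewrite ge /=; apply: lec.
    apply: frac_le1; [lra| exact: leS| exact: c0].
  rewrite total_split0.
  have -> : total (N `\ 0%N)%fset (pp0 N c E) =
            total (N `\ 0%N)%fset (fun i => (E - e0 N c E) * c i / total (N `\ 0%N)%fset c).
    apply: total_agree => j; rewrite in_fsetD1 => /andP[/negPf h _]; by rewrite /pp0 h.
  rewrite total_scale.
  have -> : (if 0%N \in N then pp0 N c E 0%N else 0) = e0 N c E.
    by rewrite /pp0 /e0 /=; case: (0%N \in N).
  have [S0|Sn] := eqVneq (total (N `\ 0%N)%fset c) 0.
    rewrite S0 invr0 mulr0 addr0.
    have S0' : 0 <= total (N `\ 0%N)%fset c.
      apply: total_ge0 => j; rewrite in_fsetD1 => /andP[_ jN]; exact: c0.
    move: leS; rewrite S0 => leS; lra.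
  by rewrite mulfK // addrC subrK.
- move=> N c c' E _ ag i iN.
  have he : e0 N c E = e0 N c' E by rewrite /e0; case: ifP => // h; rewrite (ag _ h).
  have hS : total (N `\ 0%N)%fset c = total (N `\ 0%N)%fset c'.
    apply: total_agree => j; rewrite in_fsetD1 => /andP[_ jN]; exact: ag.
  by rewrite /pp0 he hS (ag i iN).
Qed.

Lemma pp0_cu : comp_up pp0.
Proof.
move=> N c E1 E2 vp h1 h2 i iN.
move: (vp) => [N0 [c0 [E0 [C0 EC]]]].
have S0 : 0 <= total (N `\ 0%N)%fset c.
  apply: total_ge0 => j; rewrite in_fsetD1 => /andP[_ jN]; exact: c0.
move: EC; rewrite total_split0 => EC.
set S := total (N `\ 0%N)%fset c in S0 EC *.
set x1 := pp0 N c E1.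
have x10 : x1 0%N = e0 N c E1 by [].
set a := e0 N c E1.
set b := e0 N (vsub c x1) E2.
have key : a + b = e0 N c (E1 + E2).
  rewrite /b /a /e0 /vsub x10 /e0; case: ifP => h; last by rewrite addr0.
  move: EC; rewrite h => EC.
  have := c0 _ h => c00.
  case: (min_case (c 0%N) E1) => [[l1 e1]|[l1 e1]];
  case: (min_case (c 0%N) (E1 + E2)) => [[l2 e2]|[l2 e2]];
  case: (min_case (c 0%N - Num.min (c 0%N) E1) E2) => [[l3 e3]|[l3 e3]]; lra.
have ha : 0 <= a /\ a <= E1 /\ ((0%N \in N) -> a = Num.min (c 0%N) E1) /\ (~~ (0%N \in N) -> a = 0).
  rewrite /a /e0; case: ifP => h; last by split; [|split]; [|lra|split].
  have := c0 _ h => c00.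
  case: (min_case (c 0%N) E1) => [[l1 e1]|[l1 e1]]; rewrite e1; split; try lra; split; try lra; split => //.
have [ez|ne] := eqVneq i 0%N.
  by subst i; rewrite /pp0 /= -key.
rewrite /pp0 (negPf ne) -/x1 -/a -/b -/S -key.
have hx1 : total (N `\ 0%N)%fset x1 = (E1 - a) * S / S.
  rewrite -total_scale; apply: total_agree => j; rewrite in_fsetD1 => /andP[/negPf h _].
  by rewrite /x1 /pp0 h.
rewrite total_sub hx1 /vsub /x1 /pp0 (negPf ne) -/a -/S.
have [S00|Sn] := eqVneq S 0.
  by rewrite S00 !(invr0, mulr0, subr0, add0r, addr0, sub0r, oppr0).
have Sp : 0 < S by rewrite lt_def Sn S0.
have hSA : S - (E1 - a) != 0.
  rewrite gt_eqF //.
  case: ha => [a0 [aE1 [ain aout]]].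
  move: EC; case: ifP => h EC.
    have := c0 _ h => c00.
    rewrite (ain h); case: (min_case (c 0%N) E1) => [[l1 e1]|[l1 e1]]; rewrite e1; lra.
  rewrite (aout (negbT h)); lra.
field; by rewrite Sn hSA.
Qed.

Lemma pp0_cm : claims_mono pp0.
Proof.
move=> N c E i ci' vp iN lt.
have [ge le lec leS] := e0_facts vp.
move: (vp) => [N0 [c0 [E0 [C0 EC]]]].
have [ez|ne] := eqVneq i 0%N.
  subst i; rewrite /pp0 /= /e0 iN /upd eqxx.
  have := c0 _ iN => c00.
  case: (min_case (c 0%N) E) => [[l1 ->]|[l1 ->]];
  case: (min_case ci' E) => [[l2 ->]|[l2 ->]]; lra.
have he : e0 N (upd c i ci') E = e0 N c E.
  by rewrite /e0 /upd eq_sym (negPf ne).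
have iN0 : i \in (N `\ 0%N)%fset by rewrite in_fsetD1 ne iN.
rewrite /pp0 (negPf ne) he upd_total // (totalD1 c iN0).
have -> : upd c i ci' i = ci' by rewrite /upd eqxx.
have K0 : 0 <= total ((N `\ 0%N) `\ i)%fset c.
  apply: total_ge0 => j; rewrite !in_fsetD1 => /andP[_ /andP[_ jN]]; exact: c0.
apply: frac_mono; try lra; first exact: c0.
have := c0 _ iN; lra.
Qed.

Lemma pp0_le_prop N c E i : valid_prob N c E -> 0%N \in N -> i \in N -> i != 0%N ->
  pp0 N c E i <= prR N c E i.
Proof.
move=> vp h0 iN ne.
move: (vp) => [N0 [c0 [E0 [C0 EC]]]].
have S0 : 0 <= total (N `\ 0%N)%fset c.
  apply: total_ge0 => j; rewrite in_fsetD1 => /andP[_ jN]; exact: c0.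
move: C0 EC; rewrite /pp0 (negPf ne) /prR (total_split0 N c) /e0 h0 => C0 EC.
set S := total (N `\ 0%N)%fset c in S0 C0 EC *.
have ci0 := c0 _ iN.
have c00 := c0 _ h0.
have rhs0 : 0 <= E * c i / (c 0%N + S).
  apply: divr_ge0; [exact: mulr_ge0| lra].
have [S00|Sn] := eqVneq S 0.
  by have -> : (E - Num.min (c 0%N) E) * c i / S = 0 by rewrite S00 invr0 mulr0.
have Sp : 0 < S by rewrite lt_def Sn S0.
case: (min_case (c 0%N) E) => [[l1 ->]|[l1 ->]]; last by rewrite subrr !mul0r.
rewrite ler_pdivrMr // mulrAC ler_pdivlMr; last lra.
have h3 : 0 <= c 0%N + S - E by rewrite subr_ge0.
have := mulr_ge0 (mulr_ge0 ci0 c00) h3 => h; nra.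
Qed.

Definition cmr : srule R := fun N c E =>
  if [&& 0%N \in N, 2%N \in N & c 2%N < 1] then pp0 N c E else prR N c E.

Lemma cmr_std : standard_rule cmr.
Proof.
split.
- move=> N c E vp; rewrite /cmr; case: ifP => _; [exact: pp0_std.1 | exact: prop_std.1].
- move=> N c c' E vp ag.
  have hc : [&& 0%N \in N, 2%N \in N & c 2%N < 1] = [&& 0%N \in N, 2%N \in N & c' 2%N < 1].
    by case h2: (2%N \in N); rewrite ?andbF // (ag _ h2).
  rewrite /cmr hc; case: ifP => _; [exact: pp0_std.2 | exact: prop_std.2].
Qed.

Lemma cmr_cm : claims_mono cmr.
Proof.
move=> N c E i ci' vp iN lt; rewrite /cmr.
have [e|ne] := eqVneq i 2%N.
  subst i.
  have -> : upd c 2%N ci' 2%N = ci' by rewrite /upd eqxx.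
  rewrite iN /=.
  case h0: (0%N \in N) => /=; last exact: prop_cm.
  case: (ltP (c 2%N) 1) => h; case: (ltP ci' 1) => h'.
  - exact: pp0_cm.
  - apply: le_trans (pp0_le_prop vp h0 iN _) _ => //; exact: prop_cm.
  - exfalso; lra.
  - exact: prop_cm.
have -> : upd c i ci' 2%N = c 2%N by rewrite /upd eq_sym (negPf ne).
case: ifP => _; [exact: pp0_cm | exact: prop_cm].
Qed.

Definition v3 (a b d : R) : vec R := fun i => match i with 0 => a | 1 => b | 2 => d | _ => 0 end.
Definition zv : vec R := fun _ => 0.
Definition h1 (d : vec R) : hist R := [:: (d, zv)].

Lemma ctilde_h1 (c d : vec R) : ctilde c (h1 d) = (fun i => c i + d i).
Proof.
apply: funext => i; rewrite /ctilde /Delta_c /Delta_x /h1 !big_cons !big_nil /= /zv.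
by rewrite !addr0 subr0.
Qed.

Lemma vh1 (N : {fset nat}) (d : vec R) : N != fset0 -> (forall i, i \in N -> 0 <= d i) ->
  0 < total N d -> valid_hist N (h1 d).
Proof.
move=> N0 d0 dp p; rewrite /h1 mem_seq1 => /eqP -> /=.
have tz : total N zv = 0 by rewrite /total big1_seq.
rewrite tz; split.
  by split => //; split => //; split => //; split => //; exact: ltW.
split => //; move=> i iN; rewrite /zv lexx /=; exact: d0.
Qed.

Lemma phi_at (r : srule R) (N : {fset nat}) (c : vec R) (E : R) (h : hist R) (lam : R) i x :
  0 <= lam ->
  \sum_(j <- N) Num.min (c j) (r N (ctilde c h) E j + lam) = E -> i \in N ->
  Num.min (c i) (r N (ctilde c h) E i + lam) = x -> phi r N c E h i = x.
Proof. by move=> l0 sE iN <-; apply: phi_val. Qed.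

Lemma N2_neq0 : N2 != fset0.
Proof. by apply/fset0Pn; exists 0%N; rewrite !inE. Qed.
Lemma N3_neq0 : N3 != fset0.
Proof. by apply/fset0Pn; exists 0%N; rewrite !inE. Qed.
Lemma in_N2 i : (i \in N2) = (i == 0%N) || (i == 1%N).
Proof. by rewrite !inE. Qed.
Lemma in_N3 i : (i \in N3) = [|| i == 0%N, i == 1%N | i == 2%N].
Proof. by rewrite !inE. Qed.

Ltac mins := repeat (first [ rewrite min_l; last by lra | rewrite min_r; last by lra ]).

Lemma ce_sd : ~ gself_dual (phi prR).
Proof.
move=> H.
pose c := v3 1 1 0; pose d := v3 1 0 0.
have tc : total N2 c = 2 by rewrite /total sum2 /= /c /=.
have vp : valid_hprob N2 c 1 (h1 d).
  split; last by apply: vh1; [exact: N2_neq0 | move=> i; rewrite in_N2 => /orP[] /eqP -> /=; lra | rewrite /total sum2 /=; lra].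
  split; first exact: N2_neq0.
  split; first by move=> i; rewrite in_N2 => /orP[] /eqP -> /=; lra.
  rewrite tc; lra.
have i0 : 0%N \in N2 by rewrite !inE.
have := H _ _ _ _ vp 0%N i0.
rewrite tc /vsub.
have -> : (2 - 1 : R) = 1 by lra.
have T : total N2 (fun i => c i + d i) = 3 by rewrite /total sum2 /= /c /d /=; lra.
have -> : phi prR N2 c 1 (h1 d) 0%N = 2 / 3.
  apply: (@phi_at _ _ _ _ _ 0); rewrite ?lexx ?in_N2 ?eqxx //;
  rewrite ?sum2 ctilde_h1 /prR T /= /c /d /=; mins; lra.
rewrite /c /=; lra.
Qed.

Lemma vp2 (c d : vec R) E : 0 <= c 0%N -> 0 <= c 1%N -> 0 <= d 0%N -> 0 <= d 1%N ->
  0 < d 0%N + d 1%N -> 0 <= E -> 0 < c 0%N + c 1%N -> E <= c 0%N + c 1%N ->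
  valid_hprob N2 c E (h1 d).
Proof.
move=> *; split; last first.
  apply: vh1; [exact: N2_neq0 | move=> i; rewrite in_N2 => /orP[] /eqP -> // | by rewrite /total sum2].
split; first exact: N2_neq0.
split; first by move=> i; rewrite in_N2 => /orP[] /eqP ->.
by rewrite /total sum2.
Qed.

Lemma vp3 (c d : vec R) E : 0 <= c 0%N -> 0 <= c 1%N -> 0 <= c 2%N -> 0 <= d 0%N -> 0 <= d 1%N ->
  0 <= d 2%N -> 0 < d 0%N + d 1%N + d 2%N -> 0 <= E -> 0 < c 0%N + c 1%N + c 2%N ->
  E <= c 0%N + c 1%N + c 2%N -> valid_hprob N3 c E (h1 d).
Proof.
move=> *; split; last first.
  apply: vh1; [exact: N3_neq0 | move=> i; rewrite in_N3 => /or3P[] /eqP -> // | by rewrite /total sum3].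
split; first exact: N3_neq0.
split; first by move=> i; rewrite in_N3 => /or3P[] /eqP ->.
by rewrite /total sum3.
Qed.

Lemma ce_cd : ~ gcomp_down (phi prR).
Proof.
move=> H.
pose c := v3 1 1 0; pose d := v3 1 0 0.
have vp : valid_hprob N2 c (3/2) (h1 d) by apply: vp2; rewrite /c /d /=; lra.
have i0 : 0%N \in N2 by rewrite !inE.
have := H _ _ 1 _ _ vp ler01 ltac:(lra) 0%N i0.
have T : total N2 (fun i => c i + d i) = 3 by rewrite /total sum2 /= /c /d /=; lra.
have -> : phi prR N2 c 1 (h1 d) 0%N = 2 / 3.
  apply: (@phi_at _ _ _ _ _ 0); rewrite ?lexx ?in_N2 ?eqxx //;
  rewrite ?sum2 ctilde_h1 /prR T /= /c /d /=; mins; lra.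
set x := phi prR N2 c (3/2) (h1 d).
have hx0 : x 0%N = 1.
  apply: (@phi_at _ _ _ _ _ 0); rewrite ?lexx ?in_N2 ?eqxx //;
  rewrite ?sum2 ctilde_h1 /prR T /= /c /d /=; mins; lra.
have hx1 : x 1%N = 1/2.
  apply: (@phi_at _ _ _ _ _ 0); rewrite ?lexx ?in_N2 ?eqxx //;
  rewrite ?sum2 ctilde_h1 /prR T /= /c /d /=; mins; lra.
have T2 : total N2 (fun i => x i + d i) = 5/2 by rewrite /total sum2 hx0 hx1 /= /d /=; lra.
have -> : phi prR N2 x 1 (h1 d) 0%N = 4 / 5.
  apply: (@phi_at _ _ _ _ _ 0); rewrite ?lexx ?in_N2 ?eqxx //;
  rewrite ?sum2 ctilde_h1 /prR T2 hx0 ?hx1 /= /d /=; mins; lra.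
lra.
Qed.

Lemma N2_sub_N3 : (N2 `<=` N3)%fset.
Proof. by apply/fsubsetP => x; rewrite in_N2 in_N3 => /orP[]->; rewrite ?orbT. Qed.

Lemma N2_lt_N3 : (N2 `<` N3)%fset.
Proof.
rewrite fproperE N2_sub_N3 /=; apply/negP => /fsubsetP h.
by have := h 2%N; rewrite in_N2 in_N3 /= => /(_ isT).
Qed.

Lemma ce_cons : ~ gconsistency (phi prR).
Proof.
move=> H.
pose c := v3 1 1 1; pose d := v3 0 1 3.
have vp : valid_hprob N3 c 2 (h1 d) by apply: vp3; rewrite /c /d /=; lra.
have T : total N3 (fun i => c i + d i) = 7 by rewrite /total sum3 /= /c /d /=; lra.
set x := phi prR N3 c 2 (h1 d).
have S3 : \sum_(j <- N3) Num.min (c j) (prR N3 (ctilde c (h1 d)) 2 j + 1/14) = 2.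
  by rewrite sum3 ctilde_h1 /prR T /= /c /d /=; mins; lra.
have hx0 : x 0%N = 5/14.
  apply: (@phi_at _ _ _ _ _ (1/14)) => //; rewrite ?in_N3 ?eqxx //; first lra.
  rewrite ctilde_h1 /prR T /= /c /d /=; mins; lra.
have hx1 : x 1%N = 9/14.
  apply: (@phi_at _ _ _ _ _ (1/14)) => //; rewrite ?in_N3 ?eqxx //; first lra.
  rewrite ctilde_h1 /prR T /= /c /d /=; mins; lra.
have tx : total N2 x = 1 by rewrite /total sum2 hx0 hx1; lra.
have vpM : valid_hprob N2 c (total N2 x) (h1 d) by rewrite tx; apply: vp2; rewrite /c /d /=; lra.
have i0 : 0%N \in N2 by rewrite !inE.
have := H _ _ _ _ _ N2_lt_N3 vp vpM 0%N i0.
rewrite -/x tx hx0.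
have T2 : total N2 (fun i => c i + d i) = 3 by rewrite /total sum2 /= /c /d /=; lra.
have -> : phi prR N2 c 1 (h1 d) 0%N = 1/3.
  apply: (@phi_at _ _ _ _ _ 0); rewrite ?lexx ?in_N2 ?eqxx //;
  rewrite ?sum2 ctilde_h1 /prR T2 /= /c /d /=; mins; lra.
lra.
Qed.

Lemma ce_pm : ~ gpop_mono (phi prR).
Proof.
move=> H.
pose c := v3 1 4 1; pose d := v3 0 2 4.
have vp3' : valid_hprob N3 c 4 (h1 d) by apply: vp3; rewrite /c /d /=; lra.
have vp2' : valid_hprob N2 c 4 (h1 d) by apply: vp2; rewrite /c /d /=; lra.
have ha : hist_agree N2 (h1 d) (h1 d) by split => // t _; split.
have i0 : 0%N \in N2 by rewrite !inE.
have := H _ _ _ _ _ _ _ N2_sub_N3 vp2' vp3' (fun _ _ => erefl) ha 0%N i0.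
have T : total N3 (fun i => c i + d i) = 12 by rewrite /total sum3 /= /c /d /=; lra.
have -> : phi prR N3 c 4 (h1 d) 0%N = 2/3.
  apply: (@phi_at _ _ _ _ _ (1/3)) => //; rewrite ?in_N3 ?eqxx //; first lra;
  rewrite ?sum3 ctilde_h1 /prR T /= /c /d /=; mins; lra.
have T2 : total N2 (fun i => c i + d i) = 7 by rewrite /total sum2 /= /c /d /=; lra.
have -> : phi prR N2 c 4 (h1 d) 0%N = 4/7.
  apply: (@phi_at _ _ _ _ _ 0); rewrite ?lexx ?in_N2 ?eqxx //;
  rewrite ?sum2 ctilde_h1 /prR T2 /= /c /d /=; mins; lra.
lra.
Qed.

Lemma e0_N3 (f : vec R) E : e0 N3 f E = Num.min (f 0%N) E.
Proof. by rewrite /e0 in_N3. Qed.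

Lemma tot_N30 (f : vec R) : total (N3 `\ 0%N)%fset f = f 1%N + f 2%N.
Proof.
have := total_split0 N3 f; rewrite in_N3 /= {1}/total sum3 => h; lra.
Qed.

Lemma ce_cu : ~ gcomp_up (phi pp0).
Proof.
move=> H.
pose c := v3 1 1 2; pose d := v3 1 0 0.
have vp : valid_hprob N3 c (2 + 1) (h1 d) by apply: vp3; rewrite /c /d /=; lra.
have i1 : 1%N \in N3 by rewrite !inE.
have := H _ _ _ _ _ vp ltac:(lra) ltac:(lra) 1%N i1.
have Ta : total (N3 `\ 0%N)%fset (fun i => c i + d i) = 3 by rewrite tot_N30 /= /c /d /=; lra.
have e0a : e0 N3 (fun i => c i + d i) 2 = 2 by rewrite e0_N3 /c /d /=; mins; lra.
have e0b : e0 N3 (fun i => c i + d i) (2 + 1) = 2 by rewrite e0_N3 /c /d /=; mins; lra.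
have -> : phi pp0 N3 c (2 + 1) (h1 d) 1%N = 5/6.
  apply: (@phi_at _ _ _ _ _ (1/2)) => //; rewrite ?in_N3 ?eqxx //; first lra;
  rewrite ?sum3 ctilde_h1 /pp0 e0b Ta /= /c /d /=; mins; lra.
set x := phi pp0 N3 c 2 (h1 d).
have S1 : \sum_(j <- N3) Num.min (c j) (pp0 N3 (ctilde c (h1 d)) 2 j + 1/2) = 2.
  by rewrite sum3 ctilde_h1 /pp0 e0a Ta /= /c /d /=; mins; lra.
have hx0 : x 0%N = 1.
  apply: (@phi_at _ _ _ _ _ (1/2)) => //; rewrite ?in_N3 ?eqxx //; first lra.
  rewrite ctilde_h1 /pp0 e0a Ta /= /c /d /=; mins; lra.
have hx1 : x 1%N = 1/2.
  apply: (@phi_at _ _ _ _ _ (1/2)) => //; rewrite ?in_N3 ?eqxx //; first lra.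
  rewrite ctilde_h1 /pp0 e0a Ta /= /c /d /=; mins; lra.
have hx2 : x 2%N = 1/2.
  apply: (@phi_at _ _ _ _ _ (1/2)) => //; rewrite ?in_N3 ?eqxx //; first lra.
  rewrite ctilde_h1 /pp0 e0a Ta /= /c /d /=; mins; lra.
rewrite hx1.
have Tc : total (N3 `\ 0%N)%fset (fun i => vsub c x i + d i) = 2.
  by rewrite tot_N30 /vsub hx1 hx2 /= /c /d /=; lra.
have e0c : e0 N3 (fun i => vsub c x i + d i) 1 = 1.
  by rewrite e0_N3 /vsub hx0 /c /d /=; mins; lra.
have -> : phi pp0 N3 (vsub c x) 1 (h1 d) 1%N = 1/2.
  apply: (@phi_at _ _ _ _ _ (1/2)) => //; rewrite ?in_N3 ?eqxx //; first lra;
  rewrite ?sum3 ctilde_h1 /pp0 e0c Tc /= /vsub ?hx0 ?hx1 ?hx2 /c /d /=; mins; lra.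
lra.
Qed.

Lemma ce_cm : ~ gclaims_mono (phi cmr).
Proof.
move=> H.
pose c := v3 0 1 (1/2); pose d := v3 1 1 0.
have vp : valid_hprob N3 c 1 (h1 d) by apply: vp3; rewrite /c /d /=; lra.
have i2 : 2%N \in N3 by rewrite !inE.
have := H _ _ _ _ 2%N 1 vp i2 ltac:(rewrite /c /=; lra).
have h : (c 2%N + d 2%N < 1) by rewrite /c /d /=; lra.
have r1 : cmr N3 (fun i => c i + d i) 1 = pp0 N3 (fun i => c i + d i) 1.
  by rewrite /cmr !in_N3 /= h.
have h' : (upd c 2%N 1 2%N + d 2%N < 1) = false.
  by apply/negbTE; rewrite -leNgt /upd /d /=; lra.
have r2 : cmr N3 (fun i => upd c 2%N 1 i + d i) 1 = prR N3 (fun i => upd c 2%N 1 i + d i) 1.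
  by rewrite /cmr !in_N3 /= h'.
have Ta : total (N3 `\ 0%N)%fset (fun i => c i + d i) = 5/2 by rewrite tot_N30 /= /c /d /=; lra.
have e0a : e0 N3 (fun i => c i + d i) 1 = 1 by rewrite e0_N3 /c /d /=; mins; lra.
have -> : phi cmr N3 c 1 (h1 d) 2%N = 1/2.
  apply: (@phi_at _ _ _ _ _ (1/2)) => //; rewrite ?in_N3 ?eqxx //; first lra;
  rewrite ?sum3 ctilde_h1 r1 /pp0 e0a Ta /= /c /d /=; mins; lra.
have Tb : total N3 (fun i => upd c 2%N 1 i + d i) = 4 by rewrite /total sum3 /upd /= /c /d /=; lra.
have -> : phi cmr N3 (upd c 2%N 1) 1 (h1 d) 2%N = 3/8.
  apply: (@phi_at _ _ _ _ _ (1/8)) => //; rewrite ?in_N3 ?eqxx //; first lra;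
  rewrite ?sum3 ctilde_h1 r2 /prR Tb /upd /= /c /d /=; mins; lra.
lra.
Qed.
End S.

Theorem theorem2 (R : realType) :
  (exists r : srule R, standard_rule r /\ claims_mono r /\ ~ gclaims_mono (phi r)) /\
  (exists r : srule R, standard_rule r /\ comp_up r /\ ~ gcomp_up (phi r)) /\
  (exists r : srule R, standard_rule r /\ comp_down r /\ ~ gcomp_down (phi r)) /\
  (exists r : srule R, standard_rule r /\ self_dual r /\ ~ gself_dual (phi r)) /\
  (exists r : srule R, standard_rule r /\ pop_mono r /\ ~ gpop_mono (phi r)) /\
  (exists r : srule R, standard_rule r /\ consistency r /\ ~ gconsistency (phi r)).
Proof.
split; first by exists (@cmr R); split; [exact: cmr_std | split; [exact: cmr_cm | exact: ce_cm]].
split; first by exists (@pp0 R); split; [exact: pp0_std | split; [exact: pp0_cu | exact: ce_cu]].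
split; first by exists (@prR R); split; [exact: prop_std | split; [exact: prop_cd | exact: ce_cd]].
split; first by exists (@prR R); split; [exact: prop_std | split; [exact: prop_sd | exact: ce_sd]].
split; first by exists (@prR R); split; [exact: prop_std | split; [exact: prop_pm | exact: ce_pm]].
by exists (@prR R); split; [exact: prop_std | split; [exact: prop_cons | exact: ce_cons]].
Qed.
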